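(* Let $s\ge2$ and $q_0,\dots,q_{s-1}>0$ with $\sum_iq_i=1$, and consider the $Q$-expansion of $[0,1]$ with these ratios. Then the family $\varPhi$ of (interiors of) $Q$-cylinders is faithful for packing dimension calculation: $\dim_P(E,\varPhi)=\dim_{P(\mathit{unc})}(E)$ for every $E\subset[0,1]$.
   Context: The $Q$-expansion writes $x=\sum_k\beta_{a_k}\prod_{j<k}q_{a_j}$ with $\beta_i=\sum_{l<i}q_l$, digits $a_k\in\{0,\dots,s-1\}$; the rank-$n$ cylinder $\{x:a_j(x)=c_j, j\le n\}$ is an interval of length $\prod_{j\le n}q_{c_j}$. In $\mathbb R$: an uncentered $\varepsilon$-packing of $E$ is a countable family of pairwise disjoint open intervals of length $\le\varepsilon$ each meeting $E$; $\mathcal P^\alpha_{\varepsilon(\mathit{unc})}(E)=\sup\sum|E_i|^\alpha$, $\mathcal P^\alpha_{0(\mathit{unc})}=\lim_{\varepsilon\to0}$, $\mathcal P^\alpha_{(\mathit{unc})}(E)=\inf\{\sum_j\mathcal P^\alpha_{0(\mathit{unc})}(E_j):E\subset\bigcup E_j\}$, $\dim_{P(\mathit{unc})}(E)=\inf\{\alpha:\mathcal P^\alpha_{(\mathit{unc})}(E)=0\}$; $\dim_P(E,\varPhi)$ is the same using only packings by intervals from $\varPhi$. *)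

(* Defs.v *)
From HB Require Import structures.
From mathcomp Require Import all_boot all_order all_algebra.
From mathcomp Require Import all_classical all_reals all_analysis.
Set Implicit Arguments. Unset Strict Implicit. Unset Printing Implicit Defensive.
Import Order.TTheory GRing.Theory Num.Theory.
Local Open Scope classical_set_scope.
Local Open Scope ring_scope.

Section QCylinders.
Variables (R : realType) (s : nat) (q : 'I_s -> R).

Definition qbeta (i : 'I_s) : R := \sum_(l < s | (l < i)%N) q l.

(* left endpoint of the cylinder with digits c_1 ... c_n :
   sum_k beta_{c_k} prod_{j<k} q_{c_j} *)
Fixpoint cyl_left (c : seq 'I_s) : R :=
  match c with
  | [::] => 0
  | a :: c' => qbeta a + q a * cyl_left c'
  end.

Definition cyl_len (c : seq 'I_s) : R := \prod_(a <- c) q a.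

Definition qcyl_interiors : set (R * R) :=
  [set p | exists c : seq 'I_s, p = (cyl_left c, cyl_left c + cyl_len c)].
End QCylinders.

Section Packing.
Variable R : realType.

(* An open interval ]a,b[ is encoded by the pair (a,b). *)
Definition is_packing (Adm : set (R * R)) (eps : R) (E : set R)
    (P : set (R * R)) : Prop :=
  [/\ countable P, P `<=` Adm,
      (forall p, P p -> [/\ p.1 < p.2, p.2 - p.1 <= eps &
                            (`]p.1, p.2[ `&` E) !=set0]) &
      (forall p p', P p -> P p' -> p <> p' ->
          `]p.1, p.2[ `&` `]p'.1, p'.2[ = set0)].

Definition pack_eps (Adm : set (R * R)) (alpha eps : R) (E : set R) : \bar R :=
  ereal_sup [set (\esum_(p in P) ((p.2 - p.1) `^ alpha)%:E)%E
            | P in is_packing Adm eps E].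

(* P_0 = lim_{eps -> 0} P_eps; P_eps is nondecreasing in eps,
   so the limit is the infimum over eps > 0 *)
Definition pack0 (Adm : set (R * R)) (alpha : R) (E : set R) : \bar R :=
  ereal_inf [set pack_eps Adm alpha eps E | eps in [set e : R | 0 < e]].

Definition pack_measure (Adm : set (R * R)) (alpha : R) (E : set R) : \bar R :=
  ereal_inf [set (\sum_(j <oo) pack0 Adm alpha (F j))%E
            | F in [set F : nat -> set R | E `<=` \bigcup_j F j]].

Definition pack_dim (Adm : set (R * R)) (E : set R) : \bar R :=
  ereal_inf [set alpha%:E | alpha in
              [set a : R | 0 <= a /\ pack_measure Adm a E = 0%E]].

Definition pack_dim_unc (E : set R) : \bar R := pack_dim setT E.
End Packing.

(* Main.v *)
Require Import Defs.
From HB Require Import structures.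
From mathcomp Require Import all_boot all_order all_algebra.
From mathcomp Require Import all_classical all_reals all_analysis.
From mathcomp Require Import lra.
Import Order.TTheory GRing.Theory Num.Theory.
Local Open Scope classical_set_scope.
Local Open Scope ring_scope.
Set Implicit Arguments. Unset Strict Implicit. Unset Printing Implicit Defensive.


Section Cyl.
Variables (R : realType) (s : nat) (q : 'I_s -> R).
Hypothesis hs : (2 <= s)%N.
Hypothesis hq : forall i, 0 < q i.
Hypothesis hsum : \sum_(i < s) q i = 1.

Local Notation l := (cyl_left q).
Local Notation L := (cyl_len q).

Lemma L_cons a c : L (a :: c) = q a * L c.
Proof. by rewrite /cyl_len big_cons. Qed.

Lemma L_rcons c a : L (rcons c a) = L c * q a.
Proof. by rewrite /cyl_len -cats1 big_cat big_seq1. Qed.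

Lemma L_cat c d : L (c ++ d) = L c * L d.
Proof. by rewrite /cyl_len big_cat. Qed.

Lemma L_gt0 c : 0 < L c.
Proof. by rewrite /cyl_len; apply: prodr_gt0 => i _; exact: hq. Qed.

Lemma q_le1 i : q i <= 1.
Proof.
rewrite -hsum (bigD1 i) //= lerDl; apply: sumr_ge0 => j _; exact: ltW.
Qed.

Lemma L_le1 c : L c <= 1.
Proof.
rewrite /cyl_len; apply: prodr_ile1 => i _; rewrite q_le1 andbT; exact: ltW.
Qed.

Lemma L_cat_le c d : L (c ++ d) <= L c.
Proof. by rewrite L_cat ler_piMr ?L_le1 // ltW // L_gt0. Qed.

Definition gs (k : nat) : R := \sum_(i < s | (i < k)%N) q i.

Lemma gs_succ k (hk : (k < s)%N) : gs k.+1 = gs k + q (Ordinal hk).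
Proof.
rewrite /gs (bigD1 (Ordinal hk)) //= addrC; congr (_ + _).
apply: eq_bigl => i; rewrite ltnS -val_eqE /= ltn_neqAle andbC.
by case: ltngtP.
Qed.

Lemma gs_big k : (s <= k)%N -> gs k = 1.
Proof.
move=> hk; rewrite /gs -hsum; apply: eq_bigl => i.
by rewrite (leq_trans (ltn_ord i) hk).
Qed.

Lemma gs0 : gs 0 = 0.
Proof. by rewrite /gs big_pred0. Qed.

Lemma gs_step k : gs k <= gs k.+1.
Proof.
case: (ltnP k s) => hk; first by rewrite (gs_succ hk) lerDl ltW.
by rewrite !gs_big // (leq_trans hk).
Qed.

Lemma gs_mono k k' : (k <= k')%N -> gs k <= gs k'.
Proof.
move=> /subnK <-; elim: (k' - k)%N => [|n IH] //=.
by rewrite addSn; apply: le_trans IH (gs_step _).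
Qed.

Lemma gs_ge0 k : 0 <= gs k.
Proof. by rewrite -gs0 gs_mono. Qed.

Lemma gs_le1 k : gs k <= 1.
Proof. case: (leqP k s) => hk; last by rewrite gs_big // ltnW.
by rewrite -(gs_big (leqnn s)) gs_mono. Qed.

Lemma qbetaE a : qbeta q a = gs a.
Proof. by []. Qed.

Lemma qbeta_succ (a : 'I_s) : qbeta q a + q a = gs a.+1.
Proof. by rewrite (gs_succ (ltn_ord a)); congr (_ + q _); apply: val_inj. Qed.

Lemma qbeta_ge0 a : 0 <= qbeta q a.
Proof. exact: gs_ge0. Qed.

Lemma qbeta_le1 a : qbeta q a + q a <= 1.
Proof. by rewrite qbeta_succ gs_le1. Qed.

Lemma qbeta_lt (a b : 'I_s) : (a < b)%N -> qbeta q a + q a <= qbeta q b.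
Proof. by move=> hab; rewrite qbeta_succ qbetaE gs_mono. Qed.

Lemma l_bounds c : 0 <= l c /\ l c + L c <= 1.
Proof.
elim: c => [|a c [IH1 IH2]] /=; first by rewrite /cyl_len big_nil add0r.
split; first by rewrite addr_ge0 ?qbeta_ge0 // mulr_ge0 // ltW.
rewrite L_cons -addrA -mulrDr; apply: le_trans (qbeta_le1 a).
by rewrite lerD2l ler_piMr // ltW.
Qed.

Lemma l_ge0 c : 0 <= l c. Proof. by case: (l_bounds c). Qed.
Lemma lL_le1 c : l c + L c <= 1. Proof. by case: (l_bounds c). Qed.

Definition qmin : R := \prod_(i < s) q i.

Lemma qmin_gt0 : 0 < qmin.
Proof. by apply: prodr_gt0 => i _; exact: hq. Qed.

Lemma qmin_le i : qmin <= q i.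
Proof.
rewrite /qmin (bigD1 i) //= -[leRHS]mulr1 ler_pM2l //.
by apply: prodr_ile1 => j _; rewrite q_le1 ltW.
Qed.

Lemma q_le1m i : q i <= 1 - qmin.
Proof.
have h0 : (0 < s)%N by apply: leq_trans hs.
pose j : 'I_s := if val i == 0%N then Ordinal hs else Ordinal h0.
have hji : j != i.
  apply/negP => /eqP /(f_equal val); rewrite /j; case: eqP => /= hi hj.
    by rewrite -hj in hi.
  by apply: hi.
rewrite lerBrDr; apply: le_trans (lerD (lexx _) (qmin_le j)) _.
rewrite -hsum (bigD1 i) //= lerD2l (bigD1 j) //= lerDl.
by apply: sumr_ge0 => k _; exact: ltW.
Qed.

End Cyl.


Section Cyl2.
Variables (R : realType) (s : nat) (q : 'I_s -> R).
Hypothesis hs : (2 <= s)%N.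
Hypothesis hq : forall i, 0 < q i.
Hypothesis hsum : \sum_(i < s) q i = 1.

Local Notation l := (cyl_left q).
Local Notation L := (cyl_len q).

Definition inC (c : seq 'I_s) (x : R) := l c < x < l c + L c.

Lemma inC_cons a t x :
  inC (a :: t) x = inC t ((x - qbeta q a) / q a).
Proof.
rewrite /inC /= L_cons ltr_pdivlMr ?ltr_pdivrMr ?hq //.
have qa := hq a.
congr (_ && _); first by rewrite ltrBrDl mulrC.
by rewrite ltrBlDl mulrDl !(mulrC _ (q a)) addrA.
Qed.

Lemma inC_sub a t x : inC (a :: t) x -> qbeta q a < x < qbeta q a + q a.
Proof.
rewrite /inC /= L_cons. move=> /andP[h1 h2].
have [g1 g2] := l_bounds hq hsum t.
have qa := hq a.
have e1 : 0 <= q a * l t by rewrite mulr_ge0 // ltW.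
have e2 : q a * l t + q a * L t <= q a by rewrite -mulrDr -[leRHS]mulr1 ler_pM2l.
apply/andP; split; lra.
Qed.

Lemma inC_disj c1 c2 x : ~~ prefix c1 c2 -> ~~ prefix c2 c1 ->
  inC c1 x -> inC c2 x -> False.
Proof.
elim: c1 c2 x => [|a t1 IH] [|b t2] x //=.
case: (eqVneq a b) => [<-|hab] /=.
  rewrite !inC_cons => h1 h2; exact: IH.
move=> _ _ /inC_sub /andP[h1 h2] /inC_sub /andP[h3 h4].
case: (ltngtP a b) => hab'.
- by have := qbeta_lt hq hsum hab'; lra.
- by have := qbeta_lt hq hsum hab'; lra.
- by move: hab; rewrite (ord_inj hab') eqxx.
Qed.

End Cyl2.


Lemma ex_pow (R : realType) (r d : R) : 0 <= r < 1 -> 0 < d -> exists n : nat, r ^+ n <= d.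
Proof.
move=> /andP[r0 r1] d0.
have h : `|r| < 1 by rewrite ger0_norm.
have := cvg_expr h.
move/cvgrPdist_lt => /(_ d d0) [N _ hN].
exists N; have := hN N (leqnn N); rewrite /= sub0r normrN ger0_norm ?exprn_ge0 //.
by move/ltW.
Qed.

Section Cyl3.
Variables (R : realType) (s : nat) (q : 'I_s -> R).
Hypothesis hs : (2 <= s)%N.
Hypothesis hq : forall i, 0 < q i.
Hypothesis hsum : \sum_(i < s) q i = 1.

Local Notation l := (cyl_left q).
Local Notation L := (cyl_len q).

Definition Dset (x : R) := exists c, x = l c \/ x = l c + L c.

Lemma L_nil : L [::] = 1. Proof. by rewrite /cyl_len big_nil. Qed.

Lemma digit x : 0 < x < 1 -> ~ Dset x ->
  exists a, qbeta q a < x < qbeta q a + q a.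
Proof.
move=> /andP[x0 x1] nD.
have ex : exists k, x < gs q k by exists s; rewrite gs_big.
case: (ex_minnP ex) => k hk hmin.
case: k hk hmin => [|k] hk hmin; first by move: hk; rewrite gs0; lra.
have ks : (k < s)%N.
  rewrite ltnNge; apply/negP => sk.
  by have := hmin k; rewrite gs_big // x1 ltnn => /(_ isT).
have hle : gs q k <= x.
  by rewrite leNgt; apply/negP => /hmin; rewrite ltnn.
exists (Ordinal ks); rewrite qbeta_succ qbetaE /= hk andbT.
rewrite lt_neqAle hle andbT; apply/negP => /eqP e.
apply: nD; exists [:: Ordinal ks]; left => /=.
by rewrite /cyl_left mulr0 addr0 qbetaE /= e.
Qed.

Lemma y_notD a x : ~ Dset x -> ~ Dset ((x - qbeta q a) / q a).
Proof.
move=> nD [c hc]; apply: nD; exists (a :: c).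
have qa := hq a.
have ex : x = qbeta q a + q a * ((x - qbeta q a) / q a).
  by rewrite mulrC divfK ?gt_eqF // addrC subrK.
case: hc => hc; [left|right]; rewrite {1}ex hc /= ?L_cons //.
by rewrite mulrDr addrA.
Qed.

Lemma y_bounds a x : qbeta q a < x < qbeta q a + q a ->
  0 < (x - qbeta q a) / q a < 1.
Proof.
move=> /andP[h1 h2]; have qa := hq a.
rewrite ltr_pdivlMr // ltr_pdivrMr // mul0r mul1r; apply/andP; split; lra.
Qed.

Definition stop (d : R) (c : seq 'I_s) :=
  exists c' a, c = rcons c' a /\ L c <= d < L c'.

Lemma stop_exists d x : 0 < d < 1 -> 0 < x < 1 -> ~ Dset x ->
  exists c, stop d c /\ inC q c x.
Proof.
move=> /andP[d0 d1].
have r01 : 0 <= 1 - qmin q < 1.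
  have := qmin_gt0 hq; have := q_le1m hs hq hsum (Ordinal (leq_trans (isT : (0 < 2)%N) hs)).
  have := hq (Ordinal (leq_trans (isT : (0 < 2)%N) hs)); lra.
have [n hn] := ex_pow r01 d0.
elim: n x d d0 d1 hn => [|n IH] x d d0 d1 hn hx nD; first by move: hn; rewrite expr0; lra.
have [a ha] := digit hx nD.
have qa := hq a.
case: (lerP (q a) d) => hqd.
  exists [:: a]; split; first by exists [::], a; split => //; rewrite L_cons L_nil mulr1 hqd d1.
  rewrite (inC_cons hq) /inC L_nil.
  by rewrite /= add0r; apply: y_bounds.
have d'0 : 0 < d / q a by rewrite divr_gt0.
have d'1 : d / q a < 1 by rewrite ltr_pdivrMr // mul1r.
have hn' : (1 - qmin q) ^+ n <= d / q a.
  rewrite ler_pdivlMr // mulrC; apply: le_trans hn; rewrite exprS.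
  by rewrite ler_wpM2r ?exprn_ge0 ?q_le1m //; case/andP: r01.
have [c [[c' [b [-> /andP[h1 h2]]]] hc]] :=
  IH _ _ d'0 d'1 hn' (y_bounds ha) (y_notD nD).
exists (a :: rcons c' b); split; last by rewrite (inC_cons hq).
exists (a :: c'), b; split => //; rewrite !L_cons; apply/andP; split.
  by rewrite -ler_pdivlMl // mulrC.
by rewrite -ltr_pdivrMl // mulrC.
Qed.

Lemma stop_noprefix d c1 c2 : stop d c1 -> stop d c2 -> c1 != c2 -> ~~ prefix c1 c2.
Proof.
move=> [c1' [a1 [e1 /andP[h1 h1']]]] [c2' [a2 [e2 /andP[h2 h2']]]] ne.
apply/negP => /prefixP [d' ed].
case/lastP: d' ed => [|d' b] ed; first by move: ne; rewrite ed cats0 eqxx.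
move: ed; rewrite e2 -rcons_cat => /eqP; rewrite eqseq_rcons => /andP[/eqP ec _].
have : L c2' <= L c1 by rewrite ec L_cat_le.
move: h1 h2'; lra.
Qed.

Lemma stop_disj d c1 c2 x : stop d c1 -> stop d c2 -> c1 != c2 ->
  inC q c1 x -> inC q c2 x -> False.
Proof.
move=> s1 s2 ne; apply: (inC_disj hq hsum); first exact: stop_noprefix s1 s2 ne.
by apply: stop_noprefix s2 s1 _; rewrite eq_sym.
Qed.

Lemma stop_len d c : 0 < d -> stop d c -> qmin q * d <= L c <= d.
Proof.
move=> d0 [c' [a [-> /andP[h1 h2]]]]; rewrite h1 andbT L_rcons.
rewrite [qmin q * d]mulrC; apply: ler_pM.
- exact: ltW.
- exact: ltW (qmin_gt0 hq).
- exact: ltW.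
- exact: qmin_le.
Qed.

End Cyl3.


Lemma sep_trunc (R : realType) (d u : R) (p p' : R * R) : 0 < d -> u <= p.1 -> p.1 <= p'.1 ->
  d / 2 < p.2 - p.1 -> p'.1 < p'.2 ->
  (forall z, p.1 < z < p.2 -> p'.1 < z < p'.2 -> False) ->
  Num.trunc ((p.1 - u) / (d / 2)) != Num.trunc ((p'.1 - u) / (d / 2)).
Proof.
move=> d0 up pp' hlen hp' hd.
have h2 : p.2 <= p'.1.
  rewrite leNgt; apply/negP => h.
  case: (lerP p.2 p'.2) => h3.
    by apply: (hd ((p'.1 + p.2) / 2)); apply/andP; split; lra.
  by apply: (hd ((p'.1 + p'.2) / 2)); apply/andP; split; lra.
have h0 : 0 < d / 2 by lra.
set t := (p.1 - u) / (d / 2); set t' := (p'.1 - u) / (d / 2).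
have t0 : 0 <= t by rewrite /t divr_ge0 //; lra.
have t'0 : 0 <= t' by rewrite /t' divr_ge0 //; lra.
have tt : t + 1 < t'.
  rewrite /t /t' ltr_pdivlMr // mulrDl divfK ?gt_eqF // mul1r; lra.
have ht : (Num.trunc t)%:R <= t by rewrite truncn_le.
have : ((Num.trunc t).+1 <= Num.trunc t')%N.
  by rewrite truncn_ge_nat // -natr1; lra.
by case: eqP => // ->; rewrite ltnn.
Qed.

Section Cyl4.
Variables (R : realType) (s : nat) (q : 'I_s -> R).
Hypothesis hs : (2 <= s)%N.
Hypothesis hq : forall i, 0 < q i.
Hypothesis hsum : \sum_(i < s) q i = 1.

Local Notation l := (cyl_left q).
Local Notation L := (cyl_len q).

Definition pr (c : seq 'I_s) : R * R := (l c, l c + L c).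

Definition disjP (r : seq (R * R)) := forall p p', p \in r -> p' \in r -> p != p' ->
  forall z, p.1 < z < p.2 -> p'.1 < z < p'.2 -> False.

Lemma count_grp d (F : set R) (r : seq (R * R)) :
  0 < d < 1 -> (forall x, F x -> 0 < x < 1 /\ ~ Dset q x) -> uniq r ->
  (forall p, p \in r -> d / 2 < p.2 - p.1 <= d /\ exists2 x, F x & p.1 < x < p.2) ->
  disjP r ->
  exists B : seq (R * R), [/\ uniq B,
    (forall b, b \in B -> (exists c, [/\ stop q d c, b = pr c & (exists2 x, F x & inC q c x)]))
    & (size r <= 4 * size B)%N].
Proof.
move=> hd hF ur hr hdisj.
have hf : forall p, exists xc : R * seq 'I_s, p \in r ->
    [/\ F xc.1, p.1 < xc.1 < p.2, stop q d xc.2 & inC q xc.2 xc.1].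
  move=> p; case: (boolP (p \in r)) => pr; last by exists (0, [::]).
  have [_ [x Fx hx]] := hr p pr.
  have [x01 nD] := hF x Fx.
  have [c [sc ic]] := stop_exists hs hq hsum hd x01 nD.
  by exists (x, c) => _; split.
have [f hf'] := choice hf.
set B := undup [seq pr (f p).2 | p <- r].
exists B; split; first exact: undup_uniq.
  move=> b; rewrite mem_undup => /mapP [p pin ->].
  have [h1 h2 h3 h4] := hf' p pin.
  by exists (f p).2; split => //; exists (f p).1.
set phi := fun p : R * R => (pr (f p).2,
  (inord (Num.trunc ((p.1 - (l (f p).2 - d)) / (d / 2))) : 'I_4)).
have d0 : 0 < d by case/andP: hd.
have bnds : forall p, p \in r ->
   [/\ 0 <= (p.1 - (l (f p).2 - d)), l (f p).2 - d <= p.1 &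
     (Num.trunc ((p.1 - (l (f p).2 - d)) / (d / 2)) < 4)%N].
  move=> p pin; have [h1 /andP[h2 h3] h4 /andP[h5 h6]] := hf' p pin.
  have /andP[_ hL] := stop_len hq hsum d0 h4.
  have /andP[_ hl] := (hr p pin).1.
  have e1 : l (f p).2 - d <= p.1 by lra.
  have t0 : 0 <= (p.1 - (l (f p).2 - d)) / (d / 2) by rewrite divr_ge0 //; lra.
  split; [lra | exact: e1 | ].
  rewrite truncn_lt_nat // ltr_pdivrMr; lra.
have inj : {in r &, injective phi}.
  move=> p p' pin p'in [epr1 _ etr].
  case: (@eqVneq (R * R)%type p p') => // ne; exfalso.
  have [b1 b2 b3] := bnds p pin.
  have [b1' b2' b3'] := bnds p' p'in.
  move: etr => /(congr1 (@nat_of_ord 4)); rewrite /= !inordK // -epr1 => /eqP etr.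
  have hp := (hr p pin).1; have hp' := (hr p' p'in).1.
  case: (lerP p.1 p'.1) => hle.
    move: etr; apply/negP; apply: sep_trunc => //.
    - by case/andP: hp.
    - by case/andP: hp'; lra.
    - exact: hdisj.
  move: etr; rewrite eq_sym; apply/negP; apply: sep_trunc => //.
  - by rewrite epr1.
  - exact: ltW.
  - by case/andP: hp'.
  - by case/andP: hp; lra.
  - by move=> z h1 h2; apply: (hdisj p p' pin p'in ne z h2 h1).
have um : uniq (map phi r) by rewrite map_inj_in_uniq.
have := uniq_leq_size (s2 := [seq (b, i) | b <- B, i <- enum 'I_4]) um.
rewrite size_map size_allpairs size_enum_ord mulnC; apply.
move=> y /mapP [p pin ->]; apply: allpairs_f; last by rewrite mem_enum.
by rewrite mem_undup; apply: map_f.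
Qed.

End Cyl4.


Lemma geo_sum (R : realType) (rho : R) (k0 N : nat) : 0 <= rho < 1 ->
  \sum_(k < N | (k0 <= k)%N) rho ^+ k <= rho ^+ k0 / (1 - rho).
Proof.
move=> /andP[r0 r1].
have h1 : 0 < 1 - rho by lra.
rewrite ler_pdivlMr //.
suff : \sum_(k < N | (k0 <= k)%N) rho ^+ k * (1 - rho) <=
        rho ^+ k0 - (if (k0 <= N)%N then rho ^+ N else rho ^+ k0).
  move=> h; rewrite big_distrl /=; apply: le_trans h _; rewrite lerBlDr lerDl.
  by case: ifP => _; rewrite exprn_ge0.
elim: N => [|N IH].
  by rewrite big_ord0; case: k0 => [|k0] /=; rewrite subrr.
rewrite big_mkcond big_ord_recr /= -big_mkcond.
case: (ltngtP k0 N.+1) => hk.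
- rewrite ltnS in hk; have hk2 : (k0 <= N.+1)%N by rewrite ltnW.
  rewrite hk in IH; rewrite hk exprS.
  have : 0 <= rho ^+ N by rewrite exprn_ge0.
  move: IH; set S := \sum_(_ < _ | _) _; set t := rho ^+ N; nra.
- have hk' : (k0 <= N)%N = false by apply/negbTE; rewrite -ltnNge; exact: ltnW hk.
  rewrite hk' in IH; rewrite hk' addr0; exact: IH.
- rewrite hk ltnn in IH; rewrite hk ltnn addr0.
  by apply: le_trans IH _.
Qed.

Definition th {R : realType} : R := 2^-1.

Lemma th01 (R : realType) : 0 <= (th : R) < 1.
Proof. by rewrite /th; apply/andP; split; [rewrite invr_ge0 | rewrite invf_lt1] ; lra. Qed.

Lemma th_gt0 (R : realType) : 0 < (th : R).
Proof. by rewrite /th invr_gt0; lra. Qed.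

Lemma ex_idx (R : realType) (x : R) k0 : 0 < x <= th ^+ k0 ->
  exists k, (k0 <= k)%N /\ th ^+ k.+1 < x <= th ^+ k.
Proof.
move=> /andP[x0 xk].
have [n hn] := ex_pow (th01 R) (divr_gt0 x0 (ltr0Sn R 1)).
have ex : exists j, th ^+ j < x by exists n; apply: le_lt_trans hn _; lra.
case: (ex_minnP ex) => m hm hmin.
have hth := th01 R; case/andP: hth => t0 t1.
have mk : (k0 < m)%N.
  rewrite ltnNge; apply/negP => mk.
  have /= := ler_wiXn2l t0 (ltW t1) mk.
  lra.
case: m hm hmin mk => [|k] hm hmin mk //.
exists k; split; first by rewrite -ltnS.
rewrite hm /= leNgt; apply/negP => /hmin; rewrite ltnn.
by [].
Qed.

Lemma pow_swap (R : realType) (t g : R) k : 0 <= t -> (t ^+ k) `^ g = (t `^ g) ^+ k.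
Proof.
move=> t0; rewrite -powR_mulrn // -powRrM -powR_mulrn ?powR_ge0 //.
by rewrite -powRrM mulrC.
Qed.

Lemma sum_ge_const (R : numDomainType) (T : eqType) (B : seq T) (f : T -> R) c :
  (forall b, b \in B -> c <= f b) -> (size B)%:R * c <= \sum_(b <- B) f b.
Proof.
elim: B => [|a B IH] h; first by rewrite big_nil mul0r.
rewrite big_cons /= -addn1 natrD mulrDl mul1r addrC lerD //.
  exact: (h a (mem_head a B)).
by apply: IH => b hb; apply: h; rewrite inE hb orbT.
Qed.

Lemma sum_le_const (R : numDomainType) (T : eqType) (B : seq T) (f : T -> R) c :
  (forall b, b \in B -> f b <= c) -> \sum_(b <- B) f b <= (size B)%:R * c.
Proof.
elim: B => [|a B IH] h; first by rewrite big_nil mul0r.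
rewrite big_cons /= -addn1 natrD mulrDl mul1r [X in _ <= X]addrC lerD //.
  exact: (h a (mem_head a B)).
by apply: IH => b hb; apply: h; rewrite inE hb orbT.
Qed.

Section Main.
Variables (R : realType) (s : nat) (q : 'I_s -> R).
Hypothesis hs : (2 <= s)%N.
Hypothesis hq : forall i, 0 < q i.
Hypothesis hsum : \sum_(i < s) q i = 1.

Local Notation l := (cyl_left q).
Local Notation L := (cyl_len q).

Variables (F : set R) (al be d0 M : R).
Hypothesis hal : 0 <= al.
Hypothesis halbe : al < be.
Hypothesis hF : forall x, F x -> 0 < x < 1 /\ ~ Dset q x.
Hypothesis HM : forall d B, 0 < d -> d <= d0 -> d < 1 -> uniq B ->
  (forall b, b \in B -> exists c, [/\ stop q d c, b = pr q c & (exists2 x, F x & inC q c x)]) ->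
  \sum_(b <- B) (b.2 - b.1) `^ al <= M.

Lemma M_ge0 : 0 < d0 -> 0 <= M.
Proof.
move=> d00; have := HM (d := Num.min d0 th) (B := [::]).
rewrite big_nil; apply => //.
- by rewrite lt_min d00 th_gt0.
- by rewrite ge_min lexx.
- by rewrite gt_min; case/andP: (th01 R) => _ ->; rewrite orbT.
Qed.

Lemma grp_bound k (r : seq (R * R)) : th ^+ k <= d0 -> (0 < k)%N -> uniq r -> disjP r ->
  (forall p, p \in r -> th ^+ k.+1 < p.2 - p.1 <= th ^+ k /\ exists2 x, F x & p.1 < x < p.2) ->
  (size r)%:R * (qmin q * th ^+ k) `^ al <= 4 * M.
Proof.
move=> hk0 k0 ur dr hr.
have [t0 t1] := andP (th01 R).
have dpos : 0 < th ^+ k :> R by rewrite exprn_gt0 // th_gt0.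
have d1 : th ^+ k < 1 :> R.
  case: k k0 {hk0 hr dpos} => // k _.
  have : th ^+ k.+1 <= th :> R by rewrite exprS ler_piMr // exprn_ile1 // ltW.
  lra.
have hd : 0 < (th : R) ^+ k < 1 by rewrite dpos d1.
have hr' : forall p, p \in r ->
    th ^+ k / 2 < p.2 - p.1 <= th ^+ k /\ exists2 x, F x & p.1 < x < p.2.
  by move=> p /hr; rewrite exprSr.
have [B [uB hB sB]] := count_grp hs hq hsum hd hF ur hr' dr.
have hsumB := HM dpos hk0 d1 uB hB.
have hc : 0 <= (qmin q * th ^+ k) `^ al by rewrite powR_ge0.
have : (size B)%:R * (qmin q * th ^+ k) `^ al <= M.
  apply: le_trans hsumB; apply: sum_ge_const => b /hB [c [sc -> _]].
  have /andP[h1 h2] := stop_len hq hsum dpos sc.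
  rewrite /pr /= addrC addKr; apply: ge0_ler_powR => //.
    by rewrite nnegrE mulr_ge0 // ltW // qmin_gt0.
  by rewrite nnegrE ltW // L_gt0.
move=> hB'.
have h4 : (size r)%:R <= 4 * (size B)%:R :> R.
  by rewrite -[4]/(4%:R) -natrM ler_nat.
apply: le_trans (_ : _ <= (4 * (size B)%:R) * (qmin q * th ^+ k) `^ al) _.
  move: hc h4; set c := _ `^ al; set u := (size r)%:R; set v := (size B)%:R; nra.
move: hB'; set c := _ `^ al; set v := (size B)%:R; lra.
Qed.

Definition grp (k : nat) (p : R * R) : bool := (th ^+ k.+1 < p.2 - p.1 <= th ^+ k).

Lemma main_real k0 (r : seq (R * R)) : (0 < k0)%N -> th ^+ k0 <= d0 -> uniq r -> disjP r ->
  (forall p, p \in r -> 0 < p.2 - p.1 <= th ^+ k0 /\ exists2 x, F x & p.1 < x < p.2) ->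
  \sum_(p <- r) (p.2 - p.1) `^ be <=
    4 * M / qmin q `^ al * ((th `^ (be - al)) ^+ k0 / (1 - th `^ (be - al))).
Proof.
move=> k0p hk0 ur dr hr.
have [t0 t1] := andP (th01 R).
have d00 : 0 < d0 by apply: lt_le_trans hk0; rewrite exprn_gt0 // th_gt0.
have M0 := M_ge0 d00.
set rho := th `^ (be - al).
have gpos : 0 < be - al by rewrite subr_gt0.
have rho01 : 0 <= rho < 1.
  rewrite /rho powR_ge0 /=.
  have := gt0_ltr_powR gpos (x := th) (y := 1); rewrite powR1; apply => //.
  by rewrite nnegrE.
have hk : forall p, exists k, p \in r -> (k0 <= k)%N /\ grp k p.
  move=> p; case: (boolP (p \in r)) => pin; last by exists 0%N.
  have [k hk] := ex_idx (hr p pin).1; by exists k.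
have [kf hkf] := choice hk.
set N := \max_(p <- r) (kf p).+1.
have kN : forall p, p \in r -> (kf p < N)%N.
  by move=> p pin; apply: (@leq_bigmax_seq _ r predT (fun p => (kf p).+1)).
set f := fun p : R * R => (p.2 - p.1) `^ be.
set C := 4 * M / qmin q `^ al.
have qa : 0 < qmin q `^ al by rewrite powR_gt0 // qmin_gt0.
have C0 : 0 <= C by rewrite /C divr_ge0 ?mulr_ge0 // ltW.
have step1 : \sum_(p <- r) f p <= \sum_(p <- r) \sum_(k < N | grp k p) f p.
  rewrite big_seq_cond [X in _ <= X]big_seq_cond; apply: ler_sum => p /andP[pin _].
  rewrite (bigD1 (Ordinal (kN p pin))) /=; last by have [] := hkf p pin.
  by rewrite lerDl; apply: sumr_ge0 => k _; rewrite /f powR_ge0.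
apply: le_trans step1 _.
rewrite (exchange_big_dep predT) //=.
have step3 : forall k : 'I_N, \sum_(p <- r | grp k p) f p <=
    (if (k0 <= k)%N then C * rho ^+ k else 0).
  move=> k; case: ifP => kk; last first.
    rewrite big_seq_cond big1 // => p /andP[pin /andP[g1 g2]].
    have [h1 h2] := andP (hr p pin).1.
    have kk' : (k.+1 <= k0)%N by rewrite ltnNge kk.
    have hh := @ler_wiXn2l R th t0 (ltW t1) k0 k.+1 kk'.
    rewrite /= in hh; lra.
  rewrite -big_filter.
  set r' := [seq p <- r | grp k p].
  have tk0 : 0 <= (th : R) ^+ k by rewrite exprn_ge0.
  have tk : 0 < (th : R) ^+ k by rewrite exprn_gt0 // th_gt0.
  apply: le_trans (sum_le_const (c := (th ^+ k) `^ be) _) _.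
    move=> p; rewrite mem_filter => /andP[/andP[g1 g2] _].
    apply: ge0_ler_powR; [exact: le_trans hal (ltW halbe)| |by rewrite nnegrE|exact: g2].
    by rewrite nnegrE; apply: ltW; apply: le_lt_trans g1; rewrite exprn_ge0.
  have gb := @grp_bound k r'.
  have : (size r')%:R * (qmin q * th ^+ k) `^ al <= 4 * M.
    apply: gb.
    - apply: le_trans hk0; exact: (ler_wiXn2l t0 (ltW t1) kk).
    - exact: leq_trans k0p kk.
    - exact: filter_uniq.
    - move=> p p'; rewrite !mem_filter => /andP[_ pin] /andP[_ p'in]; exact: dr.
    - move=> p; rewrite mem_filter => /andP[g pin]; split => //.
      exact: (hr p pin).2.
  rewrite powRM ?(ltW (qmin_gt0 hq)) //.
  have -> : (th ^+ k) `^ be = (th ^+ k) `^ al * rho ^+ k.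
    rewrite /rho -pow_swap // -powRD; first by congr (_ `^ _); lra.
    by apply/implyP => _; rewrite gt_eqF.
  set u := (size r')%:R; set a := (th ^+ k) `^ al; set b := qmin q `^ al.
  have a0 : 0 <= a by rewrite powR_ge0.
  have rk : 0 <= rho ^+ k by rewrite exprn_ge0 //; case/andP: rho01.
  move=> h.
  have hua : u * a <= C.
    rewrite /C ler_pdivlMr //; move: h; rewrite -/b; set w := 4 * M; move=> h.
    by rewrite -mulrA [a * b]mulrC.
  by rewrite mulrA -subr_ge0 -mulrBl mulr_ge0 // subr_ge0.
apply: le_trans (ler_sum _ (fun k _ => step3 k)) _.
rewrite -big_mkcond /= -big_distrr /=; apply: ler_wpM2l => //.
exact: geo_sum.
Qed.

End Main.


Section Pack.
Variable R : realType.
Implicit Types (Adm : set (R * R)) (E : set R).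

Lemma packing0 Adm eps E : is_packing Adm eps E set0.
Proof. by split => //; exact: countable0. Qed.

Lemma pack_eps_ge0 Adm al eps E : (0 <= pack_eps Adm al eps E)%E.
Proof.
apply: ereal_sup_ubound; exists set0; first exact: packing0.
by rewrite esum_set0.
Qed.

Lemma pack0_ge0 Adm al E : (0 <= pack0 Adm al E)%E.
Proof.
by apply: le_ereal_inf_tmp => _ [e _ <-]; exact: pack_eps_ge0.
Qed.

Lemma pack_measure_ge0 Adm al E : (0 <= pack_measure Adm al E)%E.
Proof.
apply: le_ereal_inf_tmp => _ [G _ <-]; apply: nneseries_ge0 => n _ _.
exact: pack0_ge0.
Qed.

Lemma pack_eps_mono Adm Adm' al eps E : Adm `<=` Adm' ->
  (pack_eps Adm al eps E <= pack_eps Adm' al eps E)%E.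
Proof.
move=> sA; apply: ge_ereal_sup => _ [P [c1 c2 c3 c4] <-].
by apply: ereal_sup_ubound; exists P => //; split => //; apply: subset_trans sA.
Qed.

Lemma pack0_mono Adm Adm' al E : Adm `<=` Adm' ->
  (pack0 Adm al E <= pack0 Adm' al E)%E.
Proof.
move=> sA; apply: le_ereal_inf_tmp => _ [e e0 <-].
apply: le_trans (pack_eps_mono al e E sA).
by apply: ereal_inf_lbound; exists e.
Qed.

Lemma pack_measure_mono Adm Adm' al E : Adm `<=` Adm' ->
  (pack_measure Adm al E <= pack_measure Adm' al E)%E.
Proof.
move=> sA; apply: le_ereal_inf_tmp => _ [G hG <-].
apply: le_trans (_ : _ <= \sum_(j <oo) pack0 Adm al (G j))%E _.
  by apply: ereal_inf_lbound; exists G.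
apply: lee_nneseries.
  by move=> n _ _; exact: pack0_ge0.
by move=> n _; exact: pack0_mono.
Qed.

Lemma pack0_eq0 Adm al E :
  (forall e : R, 0 < e -> exists2 eps, 0 < eps & (pack_eps Adm al eps E <= e%:E)%E) ->
  pack0 Adm al E = 0%E.
Proof.
move=> h; apply/eqP; rewrite eq_le pack0_ge0 andbT.
apply/lee_addgt0Pr => e e0; rewrite add0e.
have [eps eps0 he] := h e e0.
by apply: le_trans he; apply: ereal_inf_lbound; exists eps.
Qed.

Lemma pack0_set1 (be x : R) : 0 < be -> pack0 setT be [set x] = 0%E.
Proof.
move=> be0; apply: pack0_eq0 => e e0.
exists (e `^ be^-1); first by rewrite powR_gt0.
apply: ge_ereal_sup => _ [P [c1 c2 c3 c4] <-].
apply: ge_ereal_sup => _ [X [finX XP] <-].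
have hX : forall p, X p -> p.1 < x < p.2 /\ p.2 - p.1 <= e `^ be^-1.
  move=> p /XP /c3 [h1 h2 [z [hz1 hz2]]].
  rewrite /= in hz2; rewrite -hz2.
  by move: hz1; rewrite /= in_itv /= => ->.
case: (pselect (X !=set0)) => [[p Xp]|X0]; last first.
  have -> : X = set0 by apply/seteqP; split => // y Xy; apply: X0; exists y.
  by rewrite fsbig_set0 lee_fin ltW.
have -> : X = [set p].
  apply/seteqP; split => [y Xy|y ->] //=.
  case: (@eqVneq (R * R)%type y p) => // ne; exfalso.
  have hne : y <> p by move=> h; move: ne; rewrite h eqxx.
  have hdisj := c4 y p (XP y Xy) (XP p Xp) hne.
  have [hy _] := hX y Xy; have [hp _] := hX p Xp.
  have : (`]y.1, y.2[ `&` `]p.1, p.2[) x by split; rewrite /= in_itv /=.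
  by rewrite hdisj.
rewrite fsbig_set1 lee_fin.
have [/andP[hp1 hp2] hp3] := hX p Xp.
have ee : (e `^ be^-1) `^ be = e by rewrite -powRrM mulVf ?gt_eqF // powRr1 // ltW.
rewrite -[leRHS]ee; apply: ge0_ler_powR => //; first exact: ltW.
  by rewrite nnegrE; lra.
by rewrite nnegrE powR_ge0.
Qed.

End Pack.


Section Final.
Variables (R : realType) (s : nat) (q : 'I_s -> R).
Hypothesis hs : (2 <= s)%N.
Hypothesis hq : forall i, 0 < q i.
Hypothesis hsum : \sum_(i < s) q i = 1.

Local Notation l := (cyl_left q).
Local Notation L := (cyl_len q).

Lemma pack0_main (F : set R) (al be : R) : 0 <= al -> al < be ->
  (forall x, F x -> 0 < x < 1 /\ ~ Dset q x) ->
  (pack0 (qcyl_interiors q) al F < +oo)%E -> pack0 setT be F = 0%E.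
Proof.
move=> hal halbe hF hlt.
have [_ [d0 d00 <-] hlt'] := ereal_inf_lt hlt.
have hge := pack_eps_ge0 (qcyl_interiors q) al d0 F.
move: hlt' hge; case eM: (pack_eps _ al d0 F) => [M| |] // _ _.
have HM : forall d B, 0 < d -> d <= d0 -> d < 1 -> uniq B ->
  (forall b, b \in B -> exists c, [/\ stop q d c, b = pr q c & (exists2 x, F x & inC q c x)]) ->
  \sum_(b <- B) (b.2 - b.1) `^ al <= M.
  move=> d B dpos dd0 d1 uB hB.
  rewrite -lee_fin -eM -sumEFin fsbig_seq //.
  apply: le_trans (_ : _ <= esum [set` B] (fun b => ((b.2 - b.1) `^ al)%:E))%E _.
    by apply: esum_ge; exists [set` B] => //; split => //; exact: finite_seq.
  apply: ereal_sup_ubound; exists [set` B] => //.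
  split.
  - exact: finite_set_countable (finite_seq B).
  - move=> b /= /hB [c [_ -> _]]; by exists c.
  - move=> b /= /hB [c [sc -> [x Fx ix]]].
    have /andP[_ hL] := stop_len hq hsum dpos sc.
    rewrite /pr /=; split.
    + by rewrite ltrDl L_gt0.
    + by rewrite addrC addKr; apply: le_trans dd0.
    + by exists x; split => //=; rewrite in_itv /=.
  - move=> b b' /= /hB [c [sc -> _]] /hB [c' [sc' -> _]] ne.
    apply/seteqP; split => // z [/= h1 h2]; exfalso.
    rewrite /= in_itv /= in h1; rewrite /= in_itv /= in h2.
    apply: (stop_disj hq hsum sc sc' _ h1 h2).
    by apply/negP => /eqP ec; apply: ne; rewrite ec.
apply: pack0_eq0 => e e0.
have [t0 t1] := andP (th01 R).
set K := 4 * M / qmin q `^ al.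
set rho := th `^ (be - al).
have gpos : 0 < be - al by rewrite subr_gt0.
have rho01 : 0 <= rho < 1.
  rewrite /rho powR_ge0 /=.
  have := gt0_ltr_powR gpos (x := th) (y := 1); rewrite powR1; apply => //.
  by rewrite nnegrE.
have M0 : 0 <= M.
  by rewrite -lee_fin -eM pack_eps_ge0.
have qa : 0 < qmin q `^ al by rewrite powR_gt0 // qmin_gt0.
have K0 : 0 <= K by rewrite /K divr_ge0 ?mulr_ge0 // ltW.
have r1 : 0 < 1 - rho by case/andP: rho01 => _; rewrite subr_gt0.
have tpos : 0 < e * (1 - rho) / (K + 1).
  by rewrite divr_gt0 ?mulr_gt0 //; lra.
have [k1 hk1] := ex_pow rho01 tpos.
have [k2 hk2] := ex_pow (th01 R) d00.
set k0 := maxn (maxn k1 k2) 1.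
have hk1' : rho ^+ k0 <= rho ^+ k1.
  apply: (ler_wiXn2l _ _ (_ : (k1 <= k0)%N)); first by case/andP: rho01.
    by case/andP: rho01 => _ /ltW.
  by rewrite /k0 leq_max leq_max leqnn.
have hk2' : th ^+ k0 <= d0.
  apply: le_trans hk2; apply: (ler_wiXn2l t0 (ltW t1)).
  by rewrite /k0 leq_max leq_max leqnn orbT.
have k0p : (0 < k0)%N by rewrite /k0 leq_max orbT.
exists (th ^+ k0); first by rewrite exprn_gt0 // th_gt0.
apply: ge_ereal_sup => _ [P [c1 c2 c3 c4] <-].
apply: ge_ereal_sup => _ [X [finX XP] <-].
rewrite fsbig_finite //= sumEFin lee_fin.
set r := finmap.enum_fset (fset_set X).
have memr : forall p, p \in r -> P p.
  by move=> p; rewrite in_fset_set // => /set_mem /XP.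
apply: le_trans (main_real hs hq hsum hal halbe hF HM (k0 := k0) (r := r) k0p hk2' _ _ _) _.
- exact: finmap.fset_uniq.
- move=> p p' /memr Pp /memr Pp' ne z h1 h2.
  have hne : p <> p' by move=> h; move: ne; rewrite h eqxx.
  have := c4 p p' Pp Pp' hne.
  have : (`]p.1, p.2[ `&` `]p'.1, p'.2[) z by split; rewrite /= in_itv /=.
  by move=> hz he; rewrite he in hz.
- move=> p /memr Pp; have [h1 h2 [x [hx1 hx2]]] := c3 p Pp.
  split; first by rewrite subr_gt0 h1.
  by exists x => //; move: hx1; rewrite /= in_itv.
rewrite -/rho -/K.
have h1 : rho ^+ k0 / (1 - rho) <= e / (K + 1).
  rewrite ler_pdivrMr // mulrC mulrA ler_pdivlMr; last by lra.
  have := le_trans hk1' hk1.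
  rewrite ler_pdivlMr; last by lra.
  by rewrite mulrC.
apply: le_trans (ler_wpM2l K0 h1) _.
rewrite mulrA ler_pdivrMr; last by lra.
by rewrite mulrDr mulr1 mulrC lerDl ltW.
Qed.

End Final.


Lemma pack_eps_setmono (R : realType) (Adm : set (R * R)) al eps (E E' : set R) :
  E `<=` E' -> (pack_eps Adm al eps E <= pack_eps Adm al eps E')%E.
Proof.
move=> sE; apply: ge_ereal_sup => _ [P [c1 c2 c3 c4] <-].
apply: ereal_sup_ubound; exists P => //; split => // p Pp.
have [h1 h2 [z [hz1 hz2]]] := c3 p Pp; split => //; exists z; split => //.
exact: sE.
Qed.

Lemma pack0_setmono (R : realType) (Adm : set (R * R)) al (E E' : set R) :
  E `<=` E' -> (pack0 Adm al E <= pack0 Adm al E')%E.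
Proof.
move=> sE; apply: le_ereal_inf_tmp => _ [e e0 <-].
apply: le_trans (pack_eps_setmono Adm al e sE).
by apply: ereal_inf_lbound; exists e.
Qed.

Unset Implicit Arguments.

Theorem corollary3 (R : realType) (s : nat) (q : 'I_s -> R) :
  (2 <= s)%N -> (forall i, 0 < q i) -> \sum_(i < s) q i = 1 ->
  forall E : set R, E `<=` `[0, 1] ->
    pack_dim (qcyl_interiors q) E = pack_dim_unc E.
Proof.
move=> hs hq hsum E hE.
apply/eqP; rewrite eq_le; apply/andP; split.
  apply: le_ereal_inf_tmp => _ [a [a0 ha] <-]; apply: ereal_inf_lbound.
  exists a => //; split => //; apply/eqP; rewrite eq_le pack_measure_ge0 andbT -ha.
  exact: pack_measure_mono.
apply: le_ereal_inf_tmp => _ [a [a0 ha] <-].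
apply/lee_addgt0Pr => e e0.
apply: ereal_inf_lbound; exists (a + e); last by [].
split; first by rewrite addr_ge0 // ltW.
have : (pack_measure (qcyl_interiors q) a E < 1)%E by rewrite ha lte01.
move=> /ereal_inf_lt [_ [G hG <-] hlt].
pose good := [set x : R | 0 < x < 1 /\ ~ Dset q x].
have hGj : forall j, pack0 setT (a + e) (G j `&` good) = 0%E.
  move=> j; apply: (pack0_main hs hq hsum (al := a)) => //; first by lra.
  - by move=> x [_ hx].
  - have hsub : G j `&` good `<=` G j by move=> x [].
    apply: le_lt_trans (pack0_setmono (qcyl_interiors q) a hsub) _.
    have hj : (pack0 (qcyl_interiors q) a (G j) <= \sum_(k <oo) pack0 (qcyl_interiors q) a (G k))%E.
      apply: le_trans (nneseries_lim_ge j.+1 _); last by move=> n _ _; exact: pack0_ge0.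
      rewrite big_nat_recr //= leeDr //.
      by apply: sume_ge0 => n _; exact: pack0_ge0.
    apply: le_lt_trans hj _; apply: lt_trans hlt _; exact: ltry.
pose pt (v : option (seq 'I_s * bool)) : R :=
  if v is Some (c, b) then (if b then cyl_left q c else cyl_left q c + cyl_len q c) else 0.
pose H (n : nat) : set R := if odd n then [set pt (unpickle n./2)] else G n./2 `&` good.
have hH : forall n, pack0 setT (a + e) (H n) = 0%E.
  move=> n; rewrite /H; case: ifP => _; last exact: hGj.
  by apply: pack0_set1; lra.
apply/eqP; rewrite eq_le pack_measure_ge0 andbT.
apply: le_trans (_ : _ <= \sum_(j <oo) pack0 setT (a + e) (H j))%E _.
  apply: ereal_inf_lbound; exists H => //.
  move=> x Ex.
  case: (pselect (Dset q x)) => [[c hc]|nD].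
    have [b hb] : exists b : bool, x = pt (Some (c, b)).
      by case: hc => ->; [exists true | exists false].
    exists (pickle (c, b)).*2.+1 => //.
    by rewrite /H /= odd_double /= uphalf_double pickleK.
  have := hE x Ex; rewrite /= in_itv /= => /andP[h1 h2].
  have hx : 0 < x < 1.
    have n0 : x != 0.
      by apply/eqP => h; apply: nD; exists [::]; left; rewrite h.
    have n1 : x != 1.
      apply/eqP => h; apply: nD; exists [::]; right.
      by rewrite h /= /cyl_len big_nil add0r.
    by apply/andP; split; rewrite lt_neqAle ?h1 ?h2 ?andbT // eq_sym.
  have [j _ Gj] := hG x Ex.
  exists j.*2 => //.
  by rewrite /H odd_double /= half_double; split.
by rewrite eseries0.
Qed.
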